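(* Let $0<r<\min\{\frac{d\alpha_{\min}}{2d+1},\frac{\beta_{\min}}2,e^{-4}\}$ and $J=\lfloor\frac14\log(1/r)\rfloor$. Then for every $k_0\in\mathbb Z$, the sets $g_{k_0}\widetilde\Delta'_r,\ g_{k_0+1}\widetilde\Delta'_r,\dots,g_{k_0+J}\widetilde\Delta'_r$ are pairwise disjoint.
   Context: $d=m+n$; weight vectors $\boldsymbol\alpha\in(\mathbb R_{>0})^m$, $\boldsymbol\beta\in(\mathbb R_{>0})^n$ with coordinates summing to 1; $\alpha_{\min}=\min_i\alpha_i$, $\beta_{\min}=\min_j\beta_j$. $g_s=\mathrm{diag}(e^{\alpha_1s},\dots,e^{\alpha_ms},e^{-\beta_1s},\dots,e^{-\beta_ns})$ acting on the space $X_d$ of unimodular lattices in $\mathbb R^d$. $\Delta(\Lambda)=\sup_{\mathbf v\in\Lambda\setminus\{0\}}\log(1/\|\mathbf v\|)$ (sup norm); $\mathcal H(\mathcal A)=\{\Lambda:(\Lambda\setminus\{0\})\cap\mathcal A\ne\emptyset\}$; $R_r=(1-\tfrac r{2d},1+\tfrac r{2d})\times(-\sqrt r,\sqrt r)^{d-1}$; $\Delta'_r=\Delta^{-1}[0,r]\cap\mathcal H(R_r)$; $\widetilde\Delta'_r=\bigcup_{0\le s<1/2}g_{-s}\Delta'_r$. *)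

(* Defs.v *)
From HB Require Import structures.
From mathcomp Require Import all_boot all_order all_algebra.
From mathcomp Require Import all_classical all_reals all_analysis.
Set Implicit Arguments. Unset Strict Implicit. Unset Printing Implicit Defensive.
Import Order.TTheory GRing.Theory Num.Theory.
Local Open Scope classical_set_scope.
Local Open Scope ring_scope.

Section Defs.
Variables (R : realType) (m n : nat).
Local Notation d := (m + n)%N.

Definition supnorm (v : 'rV[R]_d) : R := \big[Order.max/0]_(i < d) `|v ord0 i|.

Definition is_unimod_lattice (L : set 'rV[R]_d) : Prop :=
  exists M : 'M[R]_d, `|\det M| = 1 /\
    L = [set (map_mx (fun z : int => z%:~R) z) *m M | z in [set: 'rV[int]_d]].

Definition Xd : set (set 'rV[R]_d) := [set L | is_unimod_lattice L].

Definition gmx (alpha : 'I_m -> R) (beta : 'I_n -> R) (s : R) : 'M[R]_d :=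
  diag_mx (\row_(i < d) match fintype.split i with
                        | inl a => expR (alpha a * s)
                        | inr b => expR (- (beta b * s)) end).

Definition gact alpha beta (s : R) (L : set 'rV[R]_d) : set 'rV[R]_d :=
  [set v *m gmx alpha beta s | v in L].
Definition gset alpha beta (s : R) (S : set (set 'rV[R]_d)) : set (set 'rV[R]_d) :=
  [set gact alpha beta s L | L in S].

Definition Delta (L : set 'rV[R]_d) : R :=
  sup [set ln ((supnorm v)^-1) | v in L `\ (0 : 'rV[R]_d)].

Definition Hset (A : set 'rV[R]_d) : set (set 'rV[R]_d) :=
  [set L | (L `\ (0 : 'rV[R]_d)) `&` A !=set0].

Definition Rbox (r : R) : set 'rV[R]_d :=
  [set v | forall i : 'I_d,
     if val i == 0%N then
       1 - r / (2 * d%:R) < v ord0 i < 1 + r / (2 * d%:R)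
     else - Num.sqrt r < v ord0 i < Num.sqrt r].

Definition Delta' (r : R) : set (set 'rV[R]_d) :=
  [set L | Xd L /\ 0 <= Delta L <= r] `&` Hset (Rbox r).

Definition Delta'tilde alpha beta (r : R) : set (set 'rV[R]_d) :=
  \bigcup_(s in [set s : R | 0 <= s < 1/2]) gset alpha beta (- s) (Delta' r).

End Defs.

(* Main.v *)
Require Import Defs.
From HB Require Import structures.
From mathcomp Require Import all_boot all_order all_algebra.
From mathcomp Require Import all_classical all_reals all_analysis.
From mathcomp Require Import ring lra.
Import Order.TTheory GRing.Theory Num.Theory.
Local Open Scope classical_set_scope.
Local Open Scope ring_scope.
Set Implicit Arguments. Unset Strict Implicit.

Lemma supnorm_ge (R : realType) m n (v : 'rV[R]_(m+n)) i :
  `|v ord0 i| <= supnorm v.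
Proof.
have H : forall s : seq 'I_(m+n), i \in s ->
    `|v ord0 i| <= \big[Order.max/0]_(j <- s) `|v ord0 j|.
  elim => // a s IH; rewrite inE big_cons => /orP [/eqP->|/IH h].
    by rewrite le_max lexx.
  by rewrite le_max h orbT.
by apply: H; exact: mem_index_enum.
Qed.

Lemma supnorm_lt (R : realType) m n (v : 'rV[R]_(m+n)) x :
  0 < x -> (forall i, `|v ord0 i| < x) -> supnorm v < x.
Proof.
move=> x0 h; rewrite /supnorm; apply: (big_ind (fun y => y < x)) => //.
by move=> a b ha hb; rewrite gt_max ha hb.
Qed.

Definition rate (R : realType) m n (alpha : 'I_m -> R) (beta : 'I_n -> R)
  (i : 'I_(m+n)) : R :=
  match fintype.split i with inl a => alpha a | inr b => - beta b end.

Lemma gmx_entry (R : realType) m n (alpha : 'I_m -> R) (beta : 'I_n -> R)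
  s (u : 'rV[R]_(m+n)) i :
  (u *m gmx alpha beta s) ord0 i = u ord0 i * expR (rate alpha beta i * s).
Proof.
rewrite /gmx mul_mx_diag !mxE /rate; case: (fintype.split i) => a //.
by rewrite mulNr.
Qed.

Lemma pos_of_sum (R : realType) m (f : 'I_m -> R) :
  \sum_i f i = 1 -> (0 < m)%N.
Proof. by case: m f => [|m] f //; rewrite big_ord0 => /eqP; rewrite eq_sym oner_eq0. Qed.

Lemma lattice_lb (R : realType) m n (L : set 'rV[R]_(m+n)) :
  is_unimod_lattice L ->
  exists c, 0 < c /\ forall v, L v -> v != 0 -> c <= supnorm v.
Proof.
case=> M [detM ->].
have uM : M \in unitmx by rewrite unitmxE unitfE -normr_eq0 detM oner_neq0.
set Mi := invmx M.
pose C := \sum_i \sum_j `|Mi i j|.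
have C0 : 0 <= C by apply: sumr_ge0 => i _; apply: sumr_ge0 => j _.
exists (C+1)^-1; split; first by rewrite invr_gt0; lra.
move=> _ [z _ <-] vn0.
set zR := map_mx _ z in vn0 *.
have zRE : zR = (zR *m M) *m Mi by rewrite mulmxK.
have zn0 : zR != 0 by apply/eqP => h; move: vn0; rewrite h mul0mx eqxx.
have : ~~ [forall j, zR ord0 j == 0].
  apply: contra zn0 => /forallP h; apply/eqP/matrixP => i j.
  by rewrite ord1 (eqP (h j)) mxE.
rewrite negb_forall => /existsP [j hj].
have h1 : 1 <= `|zR ord0 j|.
  apply: norm_intr_ge1 => //; rewrite mxE; exact: intr_int.
have h2 : `|zR ord0 j| <= supnorm (zR *m M) * C.
  rewrite {1}zRE mxE.
  apply: le_trans (ler_norm_sum _ _ _) _.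
  apply: (@le_trans _ _ (\sum_k supnorm (zR *m M) * `|Mi k j|)).
    apply: ler_sum => k _; rewrite normrM; apply: ler_wpM2r => //.
    exact: supnorm_ge.
  rewrite -mulr_sumr; apply: ler_wpM2l.
    exact: le_trans (normr_ge0 _) (supnorm_ge _ j).
  apply: ler_sum => k _; rewrite (bigD1 j) //= lerDl.
  by apply: sumr_ge0 => ? _; exact: normr_ge0.
have s0 : 0 <= supnorm (zR *m M) by exact: le_trans (normr_ge0 _) (supnorm_ge _ j).
rewrite -[X in X <= _]mul1r ler_pdivrMr; last lra.
nra.
Qed.

Lemma Delta_big (R : realType) m n (L : set 'rV[R]_(m+n)) r :
  Xd L -> Delta L <= r -> forall v, L v -> v != 0 -> expR (- r) <= supnorm v.
Proof.
move=> XL DL v Lv vn0.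
have [c [c0 hc]] := lattice_lb XL.
have sp : 0 < supnorm v by exact: lt_le_trans c0 (hc v Lv vn0).
have hs : has_sup [set ln ((supnorm w)^-1) | w in L `\ (0 : 'rV[R]_(m+n))].
  split; first by exists (ln ((supnorm v)^-1)); exists v => //; split => //; exact/eqP.
  exists (ln (c^-1)) => _ [w [Lw wn0] <-].
  have wn0' : w != 0 by exact/eqP.
  have wp : 0 < supnorm w by exact: lt_le_trans c0 (hc w Lw wn0').
  rewrite ler_ln ?posrE ?invr_gt0 // lef_pV2 ?posrE //; exact: hc.
have := sup_upper_bound hs (ex_intro2 _ _ v (conj Lv (fun h => (negP vn0) (introT eqP h))) erefl).
rewrite -/(Delta L) lnV ?posrE // => h.
rewrite -(lnK (x := supnorm v)) ?posrE // ler_expR; lra.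
Qed.

Lemma estimate (R : realType) m n (alpha : 'I_m -> R) (beta : 'I_n -> R)
  r t (w : 'rV[R]_(m+n)) :
  (0 < m)%N -> (forall i, 0 < alpha i) -> (forall j, 0 < beta j) ->
  (forall j, beta j <= 1) -> 0 < r ->
  (forall i, r < (m + n)%:R * alpha i / (2 * (m + n)%:R + 1)) ->
  r < 1/2 -> r < expR (-4) -> 1/2 < t -> t < ln (r^-1) / 4 + 1/2 ->
  Rbox r w ->
  forall i, `|w ord0 i * expR (rate alpha beta i * - t)| < expR (- r).
Proof.
move=> m0 apos bpos ble1 r0 ralpha rhalf re4 t1 t2 wb i.
have := wb i.
have D0 : 0 < (m + n)%:R :> R by rewrite ltr0n addn_gt0 m0.
set D := (m + n)%:R in D0 ralpha *.
set x := r / (2 * D).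
have hx : x * (2 * D) = r by rewrite /x mulfVK // mulf_neq0 // gt_eqF.
have x0 : 0 <= x by rewrite /x divr_ge0 // ?mulr_ge0 // ltW.
have S0 : 0 < Num.sqrt r by rewrite sqrtr_gt0.
have SS : Num.sqrt r * Num.sqrt r = r by rewrite -expr2 sqr_sqrtr // ltW.
set S := Num.sqrt r in S0 SS *.
have e41 : expR (-4) < 1 :> R by rewrite expR_lt1; lra.
have S1 : S < 1 by nra.
have lnr : ln r < -4.
  by rewrite -(expRK (-4)) ltr_ln // posrE ?expR_gt0.
have lnS : ln S = ln r / 2.
  have : ln r = ln S + ln S by rewrite -SS lnM // posrE.
  lra.
have lnrV : ln r^-1 = - ln r by rewrite lnV // posrE.
rewrite lnrV in t2.
rewrite normrM (gtr0_norm (expR_gt0 _)) /rate.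
case: splitP => [a ia | b ib] wi.
- have hw : `|w ord0 i| < 1 + x.
    move: wi; case: ifP => _ /andP [h1 h2]; rewrite ltr_norml; apply/andP; split; lra.
  have ha := ralpha a; rewrite ltr_pdivlMr in ha; last lra.
  have aa := apos a.
  have h2 : 2 * r + 2 * x < alpha a by nra.
  have h3 : x + alpha a * - t < - r by nra.
  apply: (lt_le_trans (y := (1 + x) * expR (alpha a * - t))).
    by rewrite ltr_pM2r ?expR_gt0.
  apply: (le_trans (y := expR x * expR (alpha a * - t))).
    by rewrite ler_pM2r ?expR_gt0 // expR_ge1Dx.
  by rewrite -expRD ler_expR ltW.
- have hw : `|w ord0 i| < S.
    move: wi.
    have -> : (val i == 0%N) = false by apply/negbTE; rewrite -lt0n /= ib ltn_addr.
    move=> /andP [h1 h2]; rewrite ltr_norml; apply/andP; split; lra.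
  have bb := bpos b; have b1 := ble1 b.
  have h3 : - beta b * - t <= t by nra.
  apply: (lt_le_trans (y := S * expR (- beta b * - t))).
    by rewrite ltr_pM2r ?expR_gt0.
  apply: (le_trans (y := S * expR t)).
    by rewrite ler_pM2l // ler_expR.
  rewrite -(lnK (x := S)) ?posrE // -expRD ler_expR lnS; lra.
Qed.

Lemma shift_exp (R : realType) (u w a b : R) :
  u * expR a = w * expR b -> u = w * expR (b - a).
Proof.
move=> E; rewrite expRD expRN mulrA -E mulrK //.
by rewrite unitfE gt_eqF ?expR_gt0.
Qed.

Lemma core (R : realType) m n (alpha : 'I_m -> R) (beta : 'I_n -> R) r
  (K1 K2 : R) (L : set 'rV[R]_(m+n)) :
  (0 < m)%N -> (forall i, 0 < alpha i) -> (forall j, 0 < beta j) ->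
  (forall j, beta j <= 1) -> 0 < r ->
  (forall i, r < (m + n)%:R * alpha i / (2 * (m + n)%:R + 1)) ->
  r < 1/2 -> r < expR (-4) ->
  1 <= K1 - K2 -> K1 - K2 <= ln (r^-1) / 4 ->
  gset alpha beta K1 (Delta'tilde alpha beta r) L ->
  gset alpha beta K2 (Delta'tilde alpha beta r) L -> False.
Proof.
move=> m0 apos bpos ble1 r0 ralpha rhalf re4 hK1 hK2.
move=> [_ [s1 /andP [s10 s11] [L1 D1 <-]] <-].
move=> [_ [s2 /andP [s20 s21] [L2 D2 <-]] E].
move: D1 D2 => [[X1 /andP [_ DL1]] _] [_ [w [[L2w wn0] wb]]].
have : gact alpha beta K2 (gact alpha beta (- s2) L2)
    ((w *m gmx alpha beta (- s2)) *m gmx alpha beta K2).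
  by exists (w *m gmx alpha beta (- s2)) => //; exists w.
rewrite E => -[_ [u L1u <-] Eu].
pose t := K1 - s1 - K2 + s2.
have hu : forall i, u ord0 i = w ord0 i * expR (rate alpha beta i * - t).
  move=> i; move/matrixP: (Eu) => /(_ ord0 i).
  rewrite !gmx_entry -!mulrA -!expRD => /shift_exp ->.
  by congr (_ * expR _); rewrite /t; ring.
have t1 : 1/2 < t by rewrite /t; lra.
have t2 : t < ln (r^-1) / 4 + 1/2 by rewrite /t; lra.
have est := estimate m0 apos bpos ble1 r0 ralpha rhalf re4 t1 t2 wb.
have un0 : u != 0.
  apply/eqP => u0.
  pose i0 : 'I_(m+n) := Ordinal (ltn_addr n m0).
  have := hu i0; rewrite u0 mxE => /esym /eqP.
  rewrite mulf_eq0 (gt_eqF (expR_gt0 _)) orbF => /eqP wi0.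
  have := wb i0; rewrite /= wi0 => /andP [h _].
  have D1 : 1 <= (m + n)%:R :> R by rewrite ler1n addn_gt0 m0.
  move: h; rewrite subr_lt0 ltr_pdivlMr; first nra.
  lra.
have := Delta_big X1 DL1 L1u un0.
apply/negP; rewrite -ltNge; apply: supnorm_lt; first exact: expR_gt0.
by move=> i; rewrite hu; exact: est.
Qed.

Theorem proposition4p4 (R : realType) (m n : nat)
  (alpha : 'I_m -> R) (beta : 'I_n -> R)
  (alpha_pos : forall i, 0 < alpha i) (beta_pos : forall j, 0 < beta j)
  (alpha_sum : \sum_i alpha i = 1) (beta_sum : \sum_j beta j = 1)
  (r : R) (r_pos : 0 < r)
  (r_alpha : forall i, r < (m + n)%:R * alpha i / (2 * (m + n)%:R + 1))
  (r_beta : forall j, r < beta j / 2)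
  (r_e : r < expR (-4)) :
  let J : int := Num.floor (ln (r^-1) / 4) in
  forall k0 k1 k2 : int,
    k0 <= k1 <= k0 + J -> k0 <= k2 <= k0 + J -> k1 != k2 ->
    [disjoint gset alpha beta k1%:~R (Delta'tilde alpha beta r)
       & gset alpha beta k2%:~R (Delta'tilde alpha beta r)].
Proof.
move=> J k0 k1 k2 /andP [h01 h1J] /andP [h02 h2J] k12.
apply/disj_set2P; rewrite -subset0 => L [H1 H2].
have Jle : J%:~R <= ln r^-1 / 4 :> R by exact: floor_le.
have m0 := pos_of_sum alpha_sum.
have n0 := pos_of_sum beta_sum.
have ble1 : forall j, beta j <= 1.
  move=> j; rewrite -beta_sum (bigD1 j) //= lerDl.
  by apply: sumr_ge0 => ? _; exact: ltW.
have rhalf : r < 1/2.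
  have := r_beta (Ordinal n0); have := ble1 (Ordinal n0); lra.
have c01 : k0%:~R <= k1%:~R :> R by rewrite ler_int.
have c02 : k0%:~R <= k2%:~R :> R by rewrite ler_int.
have c1J : k1%:~R <= k0%:~R + J%:~R :> R by rewrite -intrD ler_int.
have c2J : k2%:~R <= k0%:~R + J%:~R :> R by rewrite -intrD ler_int.
move: k12; rewrite neq_lt => /orP [lt12|lt21].
- have c : k1%:~R + 1 <= k2%:~R :> R.
    by rewrite -[1]/(1%:~R) -intrD ler_int lezD1.
  apply: (core m0 alpha_pos beta_pos ble1 r_pos r_alpha rhalf r_e
           (K1 := k2%:~R) (K2 := k1%:~R) _ _ H2 H1); lra.
- have c : k2%:~R + 1 <= k1%:~R :> R.
    by rewrite -[1]/(1%:~R) -intrD ler_int lezD1.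
  apply: (core m0 alpha_pos beta_pos ble1 r_pos r_alpha rhalf r_e
           (K1 := k1%:~R) (K2 := k2%:~R) _ _ H1 H2); lra.
Qed.
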